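(* Let $(M_i)_{i\in I}$ be a family of sofic monoids (indexed by an arbitrary set $I$). Then the product monoid $\prod_{i\in I} M_i$ (with componentwise multiplication) is sofic.
   Context: For a non-empty finite set $X$, $\mathrm{Map}(X)$ is the monoid of all maps $X\to X$ under composition (identity $\mathrm{Id}_X$) with the Hamming metric $d_X(f,g)=|\{x\in X : f(x)\ne g(x)\}|/|X|$. For a monoid $M$, finite $K\subset M$ and $\varepsilon,\alpha>0$, a map $\varphi\colon M\to\mathrm{Map}(X)$ is a $(K,\varepsilon)$-morphism if $d_X(\varphi(k_1k_2),\varphi(k_1)\varphi(k_2))\le\varepsilon$ for all $k_1,k_2\in K$ and $d_X(\varphi(1_M),\mathrm{Id}_X)\le\varepsilon$; it is $(K,\alpha)$-injective if $d_X(\varphi(k_1),\varphi(k_2))\ge\alpha$ for all distinct $k_1,k_2\in K$. $M$ is sofic if for every finite $K\subset M$ and every $\varepsilon>0$ there exist a non-empty finite set $X$ and a $(K,1-\varepsilon)$-injective $(K,\varepsilon)$-morphism $\varphi\colon M\to\mathrm{Map}(X)$. *)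

(* Defs.v *)
From mathcomp Require Import all_boot.
From Stdlib Require Import Reals FunctionalExtensionality.

Set Implicit Arguments.
Unset Strict Implicit.
Unset Printing Implicit Defensive.

Record monoid := Monoid {
  mcarrier :> Type;
  mmul : mcarrier -> mcarrier -> mcarrier;
  mone : mcarrier;
  mmulA : forall x y z, mmul x (mmul y z) = mmul (mmul x y) z;
  mmul1l : forall x, mmul mone x = x;
  mmul1r : forall x, mmul x mone = x
}.

Section Product.
Variables (I : Type) (M : I -> monoid).
Definition prod_carrier := forall i : I, M i.
Definition prod_mul (f g : prod_carrier) : prod_carrier := fun i => mmul (f i) (g i).
Definition prod_one : prod_carrier := fun i => mone (M i).
Lemma prod_mulA : forall x y z, prod_mul x (prod_mul y z) = prod_mul (prod_mul x y) z.
Proof. by move=> x y z; apply: functional_extensionality_dep => i; apply: mmulA. Qed.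
Lemma prod_mul1l : forall x, prod_mul prod_one x = x.
Proof. by move=> x; apply: functional_extensionality_dep => i; apply: mmul1l. Qed.
Lemma prod_mul1r : forall x, prod_mul x prod_one = x.
Proof. by move=> x; apply: functional_extensionality_dep => i; apply: mmul1r. Qed.
Definition prod_monoid : monoid :=
  @Monoid prod_carrier prod_mul prod_one prod_mulA prod_mul1l prod_mul1r.
End Product.

Definition hamming (X : finType) (f g : X -> X) : R :=
  (INR #|[pred x | f x != g x]| / INR #|X|)%R.

(* (K, eps)-morphism; K a finite subset of M given as a list
   (membership via List.In, since M carries no decidable equality). *)
Definition is_morphism (M : monoid) (X : finType) (K : seq M) (eps : R)
    (phi : M -> X -> X) : Prop :=
  (forall k1 k2, List.In k1 K -> List.In k2 K ->
     (hamming (phi (mmul k1 k2)) (fun x => phi k1 (phi k2 x)) <= eps)%R) /\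
  (hamming (phi (mone M)) (fun x : X => x) <= eps)%R.

Definition is_injective (M : monoid) (X : finType) (K : seq M) (alpha : R)
    (phi : M -> X -> X) : Prop :=
  forall k1 k2, List.In k1 K -> List.In k2 K -> k1 <> k2 ->
    (alpha <= hamming (phi k1) (phi k2))%R.

Definition sofic (M : monoid) : Prop :=
  forall (K : seq M) (eps : R), (0 < eps)%R ->
    exists (X : finType) (phi : M -> X -> X),
      (0 < #|X|)%N /\ is_morphism K eps phi /\ is_injective K (1 - eps) phi.

(* Main.v *)
Require Import Defs.
From Stdlib Require Import Reals Lra Lia Psatz Classical FunctionalExtensionality.
From mathcomp Require Import all_boot.

Set Implicit Arguments.
Open Scope R_scope.

Lemma addn_INR (a b : nat) : INR (a + b)%N = INR a + INR b.
Proof. exact: plus_INR. Qed.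

Lemma muln_INR (a b : nat) : INR (a * b)%N = INR a * INR b.
Proof. exact: mult_INR. Qed.

Lemma hamming_agree (X : finType) (f g : X -> X) : (0 < #|X|)%N ->
  hamming f g = 1 - INR #|[pred x | f x == g x]| / INR #|X|.
Proof.
move=> hX; rewrite /hamming.
have H : (#|[pred x | f x == g x]| + #|[pred x | f x != g x]| = #|X|)%N.
  rewrite -(cardC [pred x | f x == g x]); by congr addn.
have HN : INR #|X| <> 0 by apply: not_0_INR => E; rewrite E in hX.
have HN' : INR #|[pred x | f x == g x]| + INR #|[pred x | f x != g x]| <> 0.
  by rewrite -addn_INR H.
rewrite -H addn_INR; field; exact HN'.
Qed.

Lemma hamming_same (X : finType) (f : X -> X) : hamming f f = 0.
Proof.
rewrite /hamming.
have -> : #|[pred x | f x != f x]| = 0%N by apply: eq_card0 => x; match goal with |- ?G => idtac G end; rewrite /= ?inE ?eqxx.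
by rewrite /= /Rdiv Rmult_0_l.
Qed.

Lemma agree_le (X : finType) (f g : X -> X) :
  0 <= INR #|[pred x | f x == g x]| / INR #|X| <= 1.
Proof.
have h1 := max_card [pred x | f x == g x].
case: (posnP #|X|) => hX.
  rewrite hX /= /Rdiv Rinv_0 Rmult_0_r; lra.
have HN : 0 < INR #|X| by apply: lt_0_INR; apply/ltP.
have h2 : INR #|[pred x | f x == g x]| <= INR #|X| by apply: le_INR; apply/leP.
have h3 := pos_INR #|[pred x | f x == g x]|.
split.
  apply: Rmult_le_pos; [lra | left; apply: Rinv_0_lt_compat; lra].
apply (Rmult_le_reg_r (INR #|X|)) => //.
rewrite /Rdiv Rmult_assoc Rinv_l; lra.
Qed.

Lemma card_agree_prod (X1 X2 : finType) (f1 g1 : X1 -> X1) (f2 g2 : X2 -> X2) :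
  #|[pred p : X1 * X2 | (f1 p.1, f2 p.2) == (g1 p.1, g2 p.2)]| =
  (#|[pred x | f1 x == g1 x]| * #|[pred x | f2 x == g2 x]|)%N.
Proof.
transitivity #|setX [set x | f1 x == g1 x] [set x | f2 x == g2 x]|.
  by apply: eq_card => -[a b]; rewrite !inE xpair_eqE.
rewrite cardsX; congr muln; apply: eq_card => x; by rewrite !inE.
Qed.

Lemma ham_prod (X1 X2 : finType) (f1 g1 : X1 -> X1) (f2 g2 : X2 -> X2) :
  (0 < #|X1|)%N -> (0 < #|X2|)%N ->
  let h := hamming (fun p : X1 * X2 => (f1 p.1, f2 p.2)) (fun p => (g1 p.1, g2 p.2)) in
  h <= hamming f1 g1 + hamming f2 g2 /\ hamming f1 g1 <= h /\ hamming f2 g2 <= h.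
Proof.
move=> h1 h2 h.
have hP : (0 < #|{: X1 * X2}|)%N by rewrite card_prod muln_gt0 h1 h2.
rewrite /h (@hamming_agree _ _ _ hP) card_agree_prod (@hamming_agree _ _ _ h1)
  (@hamming_agree _ _ _ h2) card_prod !muln_INR.
have := agree_le _ f1 g1; have := agree_le _ f2 g2.
have HN1 : 0 < INR #|X1| by apply: lt_0_INR; apply/ltP.
have HN2 : 0 < INR #|X2| by apply: lt_0_INR; apply/ltP.
have -> : INR #|[pred x | f1 x == g1 x]| * INR #|[pred x | f2 x == g2 x]| /
     (INR #|X1| * INR #|X2|) =
   (INR #|[pred x | f1 x == g1 x]| / INR #|X1|) *
   (INR #|[pred x | f2 x == g2 x]| / INR #|X2|) by field; lra.
set a := _ / INR #|X1|; set b := _ / INR #|X2|.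
move=> hb ha; nra.
Qed.

Arguments ham_prod {X1 X2}.

Section Main.
Variables (I : Type) (M : I -> monoid).
Hypothesis HS : forall i, sofic (M i).

Lemma cover1 (k : prod_monoid M) (L : seq (prod_monoid M)) :
  exists J : seq I, forall k2, List.In k2 L -> k <> k2 ->
    exists j, List.In j J /\ k j <> k2 j.
Proof.
elim: L => [|k2 L [J HJ]]; first by exists [::].
case: (classic (k = k2)) => Hk.
  exists J => k3 [<-|H3] Hne; [contradiction | exact: HJ].
have [i Hi] : exists i, k i <> k2 i.
  apply: not_all_ex_not => Hall; apply: Hk; exact: functional_extensionality_dep.
exists (i :: J) => k3 [<-|H3] Hne.
  by exists i; split => //; left.
have [j [Hj1 Hj2]] := HJ k3 H3 Hne; exists j; split => //; by right.
Qed.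

Lemma cover (L1 L2 : seq (prod_monoid M)) :
  exists J : seq I, forall k1 k2, List.In k1 L1 -> List.In k2 L2 -> k1 <> k2 ->
    exists j, List.In j J /\ k1 j <> k2 j.
Proof.
elim: L1 => [|k L1 [J HJ]]; first by exists [::].
have [J2 HJ2] := cover1 k L2.
exists (J ++ J2)%list => k1 k2 [<-|H1] H2 Hne.
  have [j [? ?]] := HJ2 k2 H2 Hne; exists j; split => //.
  by apply List.in_or_app; right.
have [j [? ?]] := HJ k1 k2 H1 H2 Hne; exists j; split => //.
by apply List.in_or_app; left.
Qed.

Lemma build (K : seq (prod_monoid M)) (d : R) (hd : 0 < d) (J : seq I) :
 exists (X : finType) (phi : prod_monoid M -> X -> X), (0 < #|X|)%N /\
 (forall k1 k2, List.In k1 K -> List.In k2 K ->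
    hamming (phi (mmul k1 k2)) (fun x => phi k1 (phi k2 x)) <= INR (size J) * d) /\
 hamming (phi (mone _)) (fun x => x) <= INR (size J) * d /\
 (forall k1 k2 j, List.In k1 K -> List.In k2 K -> List.In j J -> k1 j <> k2 j ->
    1 - d <= hamming (phi k1) (phi k2)).
Proof.
elim: J => [|j J [X' [phi' [hX' [Hm1' [Hm2' Hi']]]]]].
  exists unit, (fun _ x => x); split; first by rewrite card_unit.
  split; first by move=> k1 k2 _ _; rewrite hamming_same /=; lra.
  split; first by rewrite hamming_same /=; lra.
  by move=> ? ? ? _ _ [].
have [Xj [phij [hXj [[Hm1 Hm2] Hinj]]]] := HS j (List.map (fun k => k j) K) hd.
exists (Xj * X')%type, (fun k p => (phij (k j) p.1, phi' k p.2)).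
have hsz : INR (size (j :: J)) * d = d + INR (size J) * d.
  by rewrite [size _]/= S_INR; ring.
split; first by rewrite card_prod muln_gt0 hXj hX'.
split.
  move=> k1 k2 H1 H2.
  have [Hle _] := ham_prod (phij (mmul (k1 j) (k2 j)))
     (fun x => phij (k1 j) (phij (k2 j) x)) (phi' (mmul k1 k2))
     (fun x => phi' k1 (phi' k2 x)) hXj hX'.
  apply: Rle_trans; first exact: Hle.
  rewrite hsz; apply: Rplus_le_compat; last exact: Hm1'.
  by apply: Hm1; apply: (List.in_map (fun k => k j)).
split.
  have [Hle _] := ham_prod (phij (mone (M j))) (fun x => x) (phi' (mone _))
     (fun x => x) hXj hX'.
  apply: Rle_trans; first exact: Hle.
  rewrite hsz; apply: Rplus_le_compat; [exact: Hm2 | exact: Hm2'].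
move=> k1 k2 j0 H1 H2 Hj0 Hne.
have [_ [Hge1 Hge2]] := ham_prod (phij (k1 j)) (phij (k2 j)) (phi' k1) (phi' k2)
   hXj hX'.
case: Hj0 => [Ej|Hj0].
  subst j0; apply: Rle_trans; last exact: Hge1.
  apply: Hinj => //; by apply: (List.in_map (fun k => k j)).
apply: Rle_trans; last exact: Hge2.
exact: Hi' Hj0 Hne.
Qed.

End Main.

Theorem proposition3p7 (I : Type) (M : I -> monoid) :
  (forall i : I, sofic (M i)) -> sofic (prod_monoid M).
Proof.
move=> HS K eps heps.
have [J HJ] := cover K K.
have hn := pos_INR (size J).
set d := eps / (INR (size J) + 1).
have hd : 0 < d by apply: Rdiv_lt_0_compat; lra.
have he : eps = (INR (size J) + 1) * d by rewrite /d; field; lra.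
have hnd : INR (size J) * d <= eps by nra.
have hde : d <= eps by nra.
have [X [phi [hX [Hm1 [Hm2 Hi]]]]] := build HS K hd J.
exists X, phi; split => //; split.
  split; last lra.
  move=> k1 k2 H1 H2; have := Hm1 k1 k2 H1 H2; lra.
move=> k1 k2 H1 H2 Hne.
have [j [Hj Hj2]] := HJ k1 k2 H1 H2 Hne.
have := Hi k1 k2 j H1 H2 Hj Hj2; lra.
Qed.
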